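(* Let $\Gamma$ be a finitely generated group, $p$ a prime or $0$, $\mathbb F_p$ the prime field of characteristic $p$ ($\mathbb F_0=\mathbb Q$). Let $Q=\Gamma/[\Gamma,\Gamma]$, $\Gamma'=[\Gamma,\Gamma]$, $M=\Gamma'/[\Gamma',\Gamma']$ viewed as a $\mathbb Z[Q]$-module via conjugation, $M_p=M\otimes\mathbb F_p$ as an $\mathbb F_p[Q]$-module, $\mathcal J\subset\mathbb F_p[Q]$ its annihilator and $A=\mathbb F_p[Q]/\mathcal J$. For a prime ideal $\mathfrak p$ of $A$, let $k_{\mathfrak p}$ be the field of fractions of $A/\mathfrak p$ and $\xi_{\mathfrak p}:\Gamma\to Q\to A/\mathfrak p\to k_{\mathfrak p}^*$ the natural character. Let $K$ be a field of characteristic $p$, and $\chi\in E^1(\Gamma,K)$ with $\chi\ne1$; let $\varphi_\chi:\mathbb F_p[Q]\to K$ be the ring homomorphism induced by $\chi$. If $\mathfrak p$ is a minimal prime ideal of $A$ whose preimage in $\mathbb F_p[Q]$ is contained in $\ker\varphi_\chi$, then $H^1(\Gamma,\xi_{\mathfrak p})\neq 0$, i.e. $\xi_{\mathfrak p}\in E^1(\Gamma,k_{\mathfrak p})$.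
   Context: For a character $\chi:\Gamma\to K^*$, $H^1(\Gamma,\chi)$ is the first cohomology of $\Gamma$ with coefficients in $K$ twisted by $\chi$ (cocycles $\theta(gh)=\theta(g)+\chi(g)\theta(h)$ modulo coboundaries $g\mapsto\mu(\chi(g)-1)$), and $E^1(\Gamma,K)=\{\chi: H^1(\Gamma,\chi)\ne0\}$. Any character factors through $Q$ since $K^*$ is abelian. *)

(* Defs.v *)
From HB Require Import structures.
From mathcomp Require Import all_boot.
From mathcomp Require Import ssralg zmodp rat.
From mathcomp Require Import finmap.

Set Implicit Arguments.
Unset Strict Implicit.
Unset Printing Implicit Defensive.

Import GRing.Theory.
Local Open Scope ring_scope.

Section Groups.
Variable G : groupType.

Definition fin_generated : Prop :=
  exists S : seq G, forall x : G, exists w : seq G,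
    all (fun y => (y \in S) || (y^-1 \in S))%g w /\ x = (\prod_(y <- w) y)%g.

Definition in_derived (x : G) : Prop :=
  exists w : seq (G * G), x = (\prod_(ab <- w) [~ ab.1, ab.2])%g.

Definition is_abelianization (Q : groupType) (pi : G -> Q) : Prop :=
  [/\ forall x y : G, pi (x * y)%g = (pi x * pi y)%g,
      forall q : Q, exists x : G, pi x = q &
      forall x : G, pi x = 1%g <-> in_derived x].

(* mu : G' -> V (only its restriction to G' = [G,G] matters) exhibits   *)
(* the F-vector space V as M (x) F, where M = G'/[G',G'] (written       *)
(* additively): mu is a homomorphism from G' to (V,+), universal among  *)
(* homomorphisms from G' to F-vector spaces (universal property of      *)
(* M (x)_Z F = abelianization of G' tensored with F).                  *)
Definition hom_on_derived (F : fieldType) (W : lmodType F) (nu : G -> W) :=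
  forall x y : G, in_derived x -> in_derived y -> nu (x * y)%g = nu x + nu y.

Definition is_linear (F : fieldType) (U W : lmodType F) (f : U -> W) :=
  forall (a : F) (u v : U), f (a *: u + v) = a *: f u + f v.

Definition is_Mp (F : fieldType) (V : lmodType F) (mu : G -> V) : Prop :=
  hom_on_derived mu /\
  forall (W : lmodType F) (nu : G -> W), hom_on_derived nu ->
    exists f : V -> W,
      [/\ is_linear f, forall x, in_derived x -> f (mu x) = nu x &
          forall f' : V -> W, is_linear f' ->
            (forall x, in_derived x -> f' (mu x) = nu x) -> forall v, f' v = f v].

Definition is_Mp_action (F : fieldType) (Q : groupType) (pi : G -> Q)
    (V : lmodType F) (mu : G -> V) (act : Q -> V -> V) : Prop :=
  (forall q, is_linear (act q)) /\
  forall g x : G, in_derived x -> act (pi g) (mu x) = mu (g * x * g^-1)%g.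

End Groups.

Section GroupAlgebra.
Variables (F : fieldType) (Q : groupType).

Definition galg := {fsfun Q -> F with 0}.


Definition gzero : galg := [fsfun x in fset0%fset => (0 : F)%R].
Definition gdelta (q : Q) : galg := [fsfun x in [fset q]%fset => (1 : F)%R].
Definition gone : galg := gdelta 1%g.
Definition gadd (f g : galg) : galg :=
  [fsfun x in (finsupp f `|` finsupp g)%fset => (f x + g x)%R].
Definition gmul (f g : galg) : galg :=
  [fsfun x in [fset (a * b)%g | a in finsupp f, b in finsupp g]%fset =>
     (\sum_(a <- finsupp f) f a * g (a^-1 * x)%g)%R].

Definition is_ideal (I : galg -> Prop) : Prop :=
  [/\ I gzero, forall f g, I f -> I g -> I (gadd f g) &
      forall r f, I f -> I (gmul r f)].

Definition is_prime_ideal (I : galg -> Prop) : Prop :=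
  [/\ is_ideal I, ~ I gone & forall f g, I (gmul f g) -> I f \/ I g].

(* P is a minimal prime ideal over J, i.e. P/J is a minimal prime ideal *)
(* of F[Q]/J (P is the preimage of that prime in F[Q]).                *)
Definition minimal_prime_over (J P : galg -> Prop) : Prop :=
  [/\ is_prime_ideal P, (forall f, J f -> P f) &
      forall P' : galg -> Prop, is_prime_ideal P' -> (forall f, J f -> P' f) ->
        (forall f, P' f -> P f) -> forall f, P f -> P' f].

Definition galg_rmorph (R : nzRingType) (psi : galg -> R) : Prop :=
  [/\ forall f g, psi (gadd f g) = psi f + psi g,
      forall f g, psi (gmul f g) = psi f * psi g &
      psi gone = 1].

Definition annihilator (V : lmodType F) (act : Q -> V -> V) (f : galg) : Prop :=
  forall v : V, \sum_(q <- finsupp f) f q *: act q v = 0.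

End GroupAlgebra.

Definition Fp (p : nat) : fieldType := if p is 0 then (rat : fieldType) else ('F_p : fieldType).

Definition has_char (K : fieldType) (p : nat) : Prop :=
  forall n : nat, (n%:R == 0 :> K) = (p %| n)%N.

Section Cohomology.
Variables (G : groupType) (K : fieldType).

Definition is_character (chi : G -> K) : Prop :=
  chi 1%g = 1 /\ forall x y : G, chi (x * y)%g = chi x * chi y.

Definition cocycle (chi theta : G -> K) : Prop :=
  forall g h : G, theta (g * h)%g = theta g + chi g * theta h.

Definition coboundary (chi theta : G -> K) : Prop :=
  exists m : K, forall g : G, theta g = m * (chi g - 1).

Definition H1_nonzero (chi : G -> K) : Prop :=
  exists theta : G -> K, cocycle chi theta /\ ~ coboundary chi theta.

Definition in_E1 (chi : G -> K) : Prop := is_character chi /\ H1_nonzero chi.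

End Cohomology.

(* Main.v *)
Set Warnings "-notation-overridden,-ambiguous-paths,-notation-incompatible-prefix".
Require Import Defs.
From HB Require Import structures.
From mathcomp Require Import all_boot.
From mathcomp Require Import ssralg zmodp rat.
From mathcomp Require Import finmap.
From Stdlib Require Import Classical ClassicalEpsilon.
Import GRing.Theory.
Local Open Scope ring_scope.
Set Implicit Arguments.
Unset Strict Implicit.
Unset Printing Implicit Defensive.

Section GalgVals.
Variables (F : fieldType) (Q : groupType).
Local Notation R := (galg F Q).

Lemma gval_zero x : gzero F Q x = 0.
Proof. by rewrite /gzero fsfunE. Qed.

Lemma gval_add (f g : R) x : gadd f g x = f x + g x.
Proof.
rewrite /gadd fsfunE; case: ifP => // /negbT.
rewrite in_fsetU negb_or => /andP[h1 h2].
by rewrite !fsfun_dflt // addr0.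
Qed.

Lemma gval_delta (q x : Q) : gdelta F q x = (x == q)%:R.
Proof. by rewrite /gdelta fsfunE in_fset1; case: eqP. Qed.

Definition gopp (f : R) : R := [fsfun x in finsupp f => - f x].

Lemma gval_opp (f : R) x : gopp f x = - f x.
Proof.
rewrite /gopp fsfunE; case: ifP => // /negbT h.
by rewrite fsfun_dflt // oppr0.
Qed.

Lemma gval_mul (f g : R) x :
  gmul f g x = \sum_(a <- finsupp f) f a * g (a^-1 * x)%g.
Proof.
rewrite /gmul fsfunE; case: ifP => // /negbT h.
rewrite big_seq big1 // => a af.
have [ga|] := boolP ((a^-1 * x)%g \in finsupp g).
  case/negP: h; apply/imfset2P; exists a => //; exists (a^-1 * x)%g => //.
  by rewrite mulVKg.
by move=> gN; rewrite (fsfun_dflt gN) mulr0.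
Qed.

Lemma finsupp_delta (q : Q) : finsupp (gdelta F q) = [fset q]%fset.
Proof.
apply/fsetP => x; rewrite mem_finsupp gval_delta in_fset1.
by case: (x == q); rewrite ?oner_neq0 ?eqxx.
Qed.

Lemma gmul_delta (q r : Q) : gmul (gdelta F q) (gdelta F r) = gdelta F (q * r)%g.
Proof.
apply/fsfunP => x; rewrite gval_mul finsupp_delta big_seq_fset1 !gval_delta eqxx mul1r.
have -> : ((q^-1 * x)%g == r) = (x == (q * r)%g).
  by apply/eqP/eqP => [<-|->]; [rewrite mulVKg | rewrite mulKg].
by [].
Qed.

Lemma gadd_opp (f : R) : gadd f (gopp f) = gzero F Q.
Proof. by apply/fsfunP => x; rewrite gval_add gval_opp gval_zero subrr. Qed.

Lemma gadd00 : gadd (gzero F Q) (gzero F Q) = gzero F Q.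
Proof. by apply/fsfunP => x; rewrite gval_add gval_zero addr0. Qed.

Lemma rmorph_zero (L : nzRingType) (psi : R -> L) :
  galg_rmorph psi -> psi (gzero F Q) = 0.
Proof.
case=> hA _ _; have := hA (gzero F Q) (gzero F Q); rewrite gadd00 => e.
by apply: (@addrI _ (psi (gzero F Q))); rewrite addr0 -e.
Qed.

Lemma rmorph_opp (L : nzRingType) (psi : R -> L) f :
  galg_rmorph psi -> psi (gopp f) = - psi f.
Proof.
move=> h; have := h; case=> hA _ _; have := hA f (gopp f).
rewrite gadd_opp rmorph_zero // => /eqP; rewrite eq_sym addrC addr_eq0 => /eqP.
done.
Qed.

End GalgVals.
Section Gact.
Variables (F : fieldType) (Q : groupType) (V : lmodType F) (act : Q -> V -> V).
Hypothesis actL : forall q, is_linear (act q).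
Hypothesis actM : forall q r v, act q (act r v) = act (q * r)%g v.
Hypothesis act1 : forall v, act 1%g v = v.
Hypothesis Qab : forall q r : Q, (q * r = r * q)%g.
Local Notation R := (galg F Q).

Lemma actD q u v : act q (u + v) = act q u + act q v.
Proof. by rewrite -[u in LHS]scale1r actL scale1r. Qed.

Lemma act0 q : act q 0 = 0.
Proof.
by apply: (@addrI _ (act q 0)); rewrite -actD !addr0.
Qed.

Lemma actZ q k u : act q (k *: u) = k *: act q u.
Proof. by rewrite -[k *: u]addr0 actL act0 addr0. Qed.

Lemma act_sum q (I : Type) (r : seq I) (Fn : I -> V) :
  act q (\sum_(i <- r) Fn i) = \sum_(i <- r) act q (Fn i).
Proof. exact: (big_morph (act q) (actD q) (act0 q)). Qed.

Definition gact (a : R) (v : V) := \sum_(q <- finsupp a) a q *: act q v.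

Lemma gact_sub (a : R) (S : {fset Q}) v :
  (forall q, a q != 0 -> q \in S) -> gact a v = \sum_(q <- S) a q *: act q v.
Proof.
move=> h; rewrite /gact; apply: big_fset_incl.
  by apply/fsubsetP => q; rewrite mem_finsupp => /h.
by move=> x _; rewrite mem_finsupp negbK => /eqP ->; rewrite scale0r.
Qed.

Lemma gactDv a u v : gact a (u + v) = gact a u + gact a v.
Proof.
by rewrite /gact -big_split /=; apply: eq_bigr => q _; rewrite actD scalerDr.
Qed.

Lemma gact0v a : gact a 0 = 0.
Proof. by rewrite /gact big1 // => q _; rewrite act0 scaler0. Qed.

Lemma gactZv a k u : gact a (k *: u) = k *: gact a u.
Proof.
rewrite /gact scaler_sumr; apply: eq_bigr => q _.
by rewrite actZ !scalerA mulrC.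
Qed.

Lemma gact_lin a : is_linear (gact a).
Proof. by move=> k u v; rewrite gactDv gactZv. Qed.

Lemma gact_sumv a (I : Type) (r : seq I) (Fn : I -> V) :
  gact a (\sum_(i <- r) Fn i) = \sum_(i <- r) gact a (Fn i).
Proof. exact: (big_morph (gact a) (gactDv a) (gact0v a)). Qed.

Lemma gact_zero v : gact (gzero F Q) v = 0.
Proof. by rewrite /gact big1 // => q _; rewrite gval_zero scale0r. Qed.

Lemma gact_add a b v : gact (gadd a b) v = gact a v + gact b v.
Proof.
have hS (c : R) (S : {fset Q}) : (finsupp c `<=` S)%fset -> forall q, c q != 0 -> q \in S.
  by move=> /fsubsetP h q cq; apply: h; rewrite mem_finsupp.
rewrite (gact_sub (S := (finsupp a `|` finsupp b)%fset)); last first.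
  move=> q; rewrite gval_add in_fsetU !mem_finsupp.
  by apply: contraR; rewrite negb_or !negbK => /andP[/eqP -> /eqP ->]; rewrite addr0.
rewrite (gact_sub (S := (finsupp a `|` finsupp b)%fset) _ (hS a _ (fsubsetUl _ _))).
rewrite (gact_sub (S := (finsupp a `|` finsupp b)%fset) _ (hS b _ (fsubsetUr _ _))).
by rewrite -big_split /=; apply: eq_bigr => q _; rewrite gval_add scalerDl.
Qed.

Lemma gact_opp a v : gact (gopp a) v = - gact a v.
Proof.
rewrite (gact_sub (S := finsupp a)); last by move=> q; rewrite gval_opp oppr_eq0 mem_finsupp.
rewrite /gact -sumrN; apply: eq_bigr => q _; by rewrite gval_opp scaleNr.
Qed.

Lemma gact_delta q v : gact (gdelta F q) v = act q v.
Proof.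
by rewrite /gact finsupp_delta big_seq_fset1 gval_delta eqxx scale1r.
Qed.

Lemma gact_one v : gact (gone F Q) v = v.
Proof. by rewrite /gone gact_delta act1. Qed.

Lemma gact_mul a b v : gact (gmul a b) v = gact a (gact b v).
Proof.
pose T := [fset (c * d)%g | c in finsupp a, d in finsupp b]%fset.
rewrite (gact_sub (S := T)); last first.
  move=> x; rewrite /gmul fsfunE; by case: ifP => //; rewrite eqxx.
under eq_bigr do rewrite gval_mul scaler_suml.
rewrite exchange_big /= /gact big_seq [RHS]big_seq; apply: eq_bigr => c ca.
rewrite act_sum scaler_sumr.
under [RHS]eq_bigr do rewrite actZ actM scalerA.
have E : \sum_(i <- finsupp b) (a c * b i) *: act (c * i)%g v =
   \sum_(x <- [fset (c * d)%g | d in finsupp b]%fset) (a c * b (c^-1 * x)%g) *: act x v.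
  rewrite big_imfset /=; last by move=> x y _ _; apply: mulgI.
  by apply: eq_bigr => d _; rewrite mulKg.
rewrite E; symmetry; apply: big_fset_incl.
  apply/fsubsetP => x /imfsetP [d /= db ->].
  by apply/imfset2P; exists c => //; exists d.
move=> x _ xN; have [bx|] := boolP ((c^-1 * x)%g \in finsupp b).
  by case/negP: xN; apply/imfsetP; exists (c^-1 * x)%g => //; rewrite mulVKg.
by move=> /fsfun_dflt ->; rewrite mulr0 scale0r.
Qed.

Lemma gact_comm a b v : gact a (gact b v) = gact b (gact a v).
Proof.
rewrite /gact.
under eq_bigr do rewrite act_sum scaler_sumr.
under [RHS]eq_bigr do rewrite act_sum scaler_sumr.
rewrite exchange_big /=; apply: eq_bigr => d _; apply: eq_bigr => c _.
by rewrite !actZ !scalerA !actM Qab mulrC.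
Qed.


Variables (L : fieldType) (psi : R -> L).
Hypothesis hpsi : galg_rmorph psi.

Lemma psiD a b : psi (gadd a b) = psi a + psi b.
Proof. by case: hpsi. Qed.
Lemma psiM a b : psi (gmul a b) = psi a * psi b.
Proof. by case: hpsi. Qed.
Lemma psi1 : psi (gone F Q) = 1.
Proof. by case: hpsi. Qed.
Lemma psi0 : psi (gzero F Q) = 0.
Proof. exact: rmorph_zero. Qed.
Lemma psiN a : psi (gopp a) = - psi a.
Proof. exact: rmorph_opp. Qed.

Fixpoint spanR (ws : seq V) (v : V) : Prop :=
  match ws with
  | [::] => v = 0
  | w :: ws => exists a u, spanR ws u /\ v = gact a w + u
  end.

Lemma span0 ws : spanR ws 0.
Proof.
elim: ws => //= w ws IH; exists (gzero F Q), 0; split => //.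
by rewrite gact_zero addr0.
Qed.

Lemma spanD ws u v : spanR ws u -> spanR ws v -> spanR ws (u + v).
Proof.
elim: ws u v => [|w ws IH] u v /=; first by move=> -> ->; rewrite addr0.
move=> [a [u1 [h1 ->]]] [b [v1 [h2 ->]]].
exists (gadd a b), (u1 + v1); split; first exact: IH.
by rewrite gact_add addrACA.
Qed.

Lemma spanA ws a v : spanR ws v -> spanR ws (gact a v).
Proof.
elim: ws v => [|w ws IH] v /=; first by move=> ->; rewrite gact0v.
move=> [b [u [h ->]]]; exists (gmul a b), (gact a u); split; first exact: IH.
by rewrite gactDv gact_mul.
Qed.

Lemma spanN ws v : spanR ws v -> spanR ws (- v).
Proof.
move=> h; have := spanA (gopp (gone F Q)) h.
by rewrite gact_opp gact_one.
Qed.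

Lemma span_mem ws w : w \in ws -> spanR ws w.
Proof.
elim: ws => //= x ws IH; rewrite inE => /orP[/eqP ->|/IH h].
  by exists (gone F Q), 0; split; [exact: span0 | rewrite gact_one addr0].
by exists (gzero F Q), w; split => //; rewrite gact_zero add0r.
Qed.

Lemma span_incl ws0 ws v : {subset ws0 <= ws} -> spanR ws0 v -> spanR ws v.
Proof.
elim: ws0 v => [|w ws0 IH] v sub /=; first by move=> ->; exact: span0.
move=> [a [u [h ->]]]; apply: spanD; last first.
  by apply: IH h => x xin; apply: sub; rewrite inE xin orbT.
by apply: spanA; apply: span_mem; apply: sub; rewrite inE eqxx.
Qed.

Definition lin_on ws (f : V -> L) :=
  forall a u v, spanR ws u -> spanR ws v -> f (gact a u + v) = psi a * f u + f v.

Lemma lin_on0 ws f : lin_on ws f -> f 0 = 0.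
Proof.
move=> h; have := h (gone F Q) 0 0 (span0 ws) (span0 ws).
rewrite gact_one addr0 psi1 mul1r => e.
by apply: (@addrI _ (f 0)); rewrite addr0 -e.
Qed.

Lemma nak ws :
  (exists t, psi t != 0 /\ forall v, spanR ws v -> gact t v = 0) \/
  (exists f, lin_on ws f /\ exists v, spanR ws v /\ f v != 0).
Proof.
elim: ws => [|w ws IH].
  left; exists (gone F Q); split; first by rewrite psi1 oner_neq0.
  by move=> v /= ->; rewrite gact0v.
have [[s [ps sw]]|nA] := classic (exists s, psi s != 0 /\ spanR ws (gact s w)).
  have sv v : spanR (w :: ws) v -> spanR ws (gact s v).
    move=> [a [u [hu ->]]]; rewrite gactDv gact_comm; apply: spanD.
      exact: spanA.
    exact: spanA.
  case: IH => [[t [pt ht]]|[f [fl [v0 [hv0 fv0]]]]].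
    left; exists (gmul t s); split; first by rewrite psiM mulf_neq0.
    by move=> v hv; rewrite gact_mul; apply: ht; apply: sv.
  right; exists (fun v => (psi s)^-1 * f (gact s v)); split.
    move=> a u v hu hv /=; rewrite gactDv gact_comm fl; try exact: sv.
    by rewrite mulrDr mulrCA.
  exists v0; split.
    by exists (gzero F Q), v0; split => //; rewrite gact_zero add0r.
  rewrite -[gact s v0]addr0 fl ?(lin_on0 fl) ?addr0 ?span0 //.
  by rewrite mulKf // mulf_neq0.
  exact: span0.
right.
have uniqB a b u u' : spanR ws u -> spanR ws u' ->
    gact a w + u = gact b w + u' -> psi a = psi b.
  move=> hu hu' e; apply/eqP; rewrite -subr_eq0 -psiN -psiD.
  apply/negPn/negP => ne; apply: nA; exists (gadd a (gopp b)); split => //.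
  rewrite gact_add gact_opp.
  have -> : gact a w - gact b w = u' - u.
    have -> : gact a w = gact b w + u' - u by rewrite -e addrK.
    by rewrite -(addrA (gact b w)) addrC addrK.
  by apply: spanD => //; apply: spanN.
pose pr v := fun a => exists u, spanR ws u /\ v = gact a w + u.
pose f v := psi (epsilon (inhabits (gzero F Q)) (pr v)).
have fE a u : spanR ws u -> f (gact a w + u) = psi a.
  move=> hu; rewrite /f; set e := epsilon _ _.
  have : pr (gact a w + u) e by apply: epsilon_spec; exists a, u.
  by case=> u' [hu' eq]; apply: (uniqB e a u' u) => //; rewrite -eq.
exists f; split.
  move=> a u v [b [u1 [h1 ->]]] [c [v1 [h2 ->]]].
  have -> : gact a (gact b w + u1) + (gact c w + v1) =
     gact (gadd (gmul a b) c) w + (gact a u1 + v1).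
    by rewrite gactDv gact_add gact_mul addrACA.
  rewrite !fE //; last by apply: spanD => //; apply: spanA.
  by rewrite psiD psiM.
exists w; split; first by exists (gone F Q), 0; rewrite gact_one addr0; split => //; exact: span0.
rewrite -[w](addr0) -{1}[w](gact_one) fE ?psi1 ?oner_neq0 //; exact: span0.
Qed.
End Gact.

Lemma linD (F : fieldType) (U W : lmodType F) (f : U -> W) :
  is_linear f -> forall u v, f (u + v) = f u + f v.
Proof. by move=> h u v; rewrite -[u in LHS]scale1r h scale1r. Qed.

Lemma lin0 (F : fieldType) (U W : lmodType F) (f : U -> W) :
  is_linear f -> f 0 = 0.
Proof. by move=> h; apply: (@addrI _ (f 0)); rewrite -linD // !addr0. Qed.

Section Groups2.
Variable G : groupType.
Local Notation der := (@in_derived G).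

Lemma der1 : der 1%g.
Proof. by exists [::]; rewrite big_nil. Qed.

Lemma derM x y : der x -> der y -> der (x * y)%g.
Proof. by move=> [w ->] [w' ->]; exists (w ++ w'); rewrite big_cat. Qed.

Lemma derR a b : der [~ a, b].
Proof. by exists [:: (a, b)]; rewrite big_seq1. Qed.

Lemma derV x : der x -> der x^-1%g.
Proof.
move=> [w ->]; elim: w => [|ab w IH]; first by rewrite big_nil invg1; exact: der1.
by rewrite big_cons invgM; apply: derM => //; rewrite invgR; apply: derR.
Qed.

Lemma derJ x y : der x -> der (x ^ y)%g.
Proof.
move=> [w ->]; exists [seq (ab.1 ^ y, ab.2 ^ y)%g | ab <- w].
by rewrite big_map conjg_prod; apply: eq_bigr => ab _; rewrite conjRg.
Qed.

Lemma commMr (x y z : G) : [~ x, y * z]%g = ([~ x, z] * [~ x, y] ^ z)%g.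
Proof. by rewrite /commg /conjg !invgM !mulgA !mulgK. Qed.

Lemma commMl (x y z : G) : [~ x * y, z]%g = ([~ x, z] ^ y * [~ y, z])%g.
Proof. by rewrite /commg /conjg !invgM !mulgA !mulgK. Qed.

End Groups2.

Section Main.
Variables (G : groupType) (F : fieldType) (Q : groupType) (pi : G -> Q).
Variables (V : lmodType F) (mu : G -> V) (act : Q -> V -> V).
Hypothesis habel : is_abelianization pi.
Hypothesis hMp : is_Mp mu.
Hypothesis hact : is_Mp_action pi mu act.
Local Notation der := (@in_derived G).

Lemma piM x y : pi (x * y)%g = (pi x * pi y)%g.
Proof. by case: habel. Qed.

Lemma pi_surj q : exists x, pi x = q.
Proof. by case: habel. Qed.

Lemma pi_der x : der x -> pi x = 1%g.
Proof. by case: habel => _ _ h /h. Qed.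

Lemma pi1 : pi 1%g = 1%g.
Proof. by apply: (@mulgI _ (pi 1%g)); rewrite -piM !mulg1. Qed.

Lemma piV x : pi x^-1%g = (pi x)^-1%g.
Proof. by apply: (@mulgI _ (pi x)); rewrite -piM !mulgV pi1. Qed.

Lemma Qab (q r : Q) : (q * r = r * q)%g.
Proof.
have [x <-] := pi_surj q; have [y <-] := pi_surj r.
have := pi_der (derR x y); rewrite /commg /conjg !piM !piV => e.
apply/commgP; by rewrite /commg /conjg e.
Qed.

Lemma muM x y : der x -> der y -> mu (x * y)%g = mu x + mu y.
Proof. by case: hMp => h _; apply: h. Qed.

Lemma mu1 : mu 1%g = 0.
Proof.
by apply: (@addrI _ (mu 1%g)); rewrite -muM ?mulg1 ?addr0 //; exact: der1.
Qed.

Lemma actL q : is_linear (act q).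
Proof. by case: hact. Qed.

Lemma actJ g x : der x -> act (pi g) (mu x) = mu (g * x * g^-1)%g.
Proof. by case: hact => _ h; apply: h. Qed.

Lemma muJ g x : der x -> mu (x ^ g)%g = act (pi g)^-1%g (mu x).
Proof. by move=> dx; rewrite -piV actJ // invgK /conjg mulgA. Qed.

Lemma uniq_lin (W : lmodType F) (f1 f2 : V -> W) :
  is_linear f1 -> is_linear f2 -> (forall x, der x -> f1 (mu x) = f2 (mu x)) ->
  forall v, f1 v = f2 v.
Proof.
move=> l1 l2 e v; case: hMp => _ /(_ W (fun x => f2 (mu x))) [].
  by move=> x y dx dy; rewrite muM // linD.
by move=> f [_ hf U]; rewrite (U f1) // (U f2).
Qed.

Lemma actM q r v : act q (act r v) = act (q * r)%g v.
Proof.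
have [g <-] := pi_surj q; have [h <-] := pi_surj r.
apply: (uniq_lin (f1 := fun v => act (pi g) (act (pi h) v))) => //.
- by move=> k u w /=; rewrite !actL.
- exact: actL.
move=> x dx /=; rewrite actJ // actJ; last first.
  have -> : (h * x * h^-1 = x ^ h^-1)%g by rewrite /conjg invgK mulgA.
  exact: derJ.
by rewrite -piM actJ // invgM !mulgA.
Qed.

Lemma act1 v : act 1%g v = v.
Proof.
apply: (uniq_lin (f2 := id)) => //; first exact: actL.
by move=> x dx; rewrite -pi1 actJ // invg1 mulg1 mul1g.
Qed.

Lemma act_span ws q v : spanR act ws v -> spanR act ws (act q v).
Proof.
move=> h; rewrite -(@gact_delta _ _ _ act q v).
by apply: spanA => //; [exact: actL | exact: actM].
Qed.

Lemma fg_span : fin_generated G -> exists ws : seq V,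
  (forall x, der x -> spanR act ws (mu x)) /\ (forall w, w \in ws -> exists x, der x /\ w = mu x).
Proof.
move=> [S hS].
pose T := S ++ map (fun y => y^-1)%g S.
have hT w : all (fun y => (y \in S) || (y^-1 \in S))%g w -> all (mem T) w.
  move=> /allP h; apply/allP => y /h /orP[yS|yS]; rewrite /= mem_cat ?yS //.
  by apply/orP; right; rewrite -[y]invgK; apply: map_f.
exists [seq mu [~ x, y]%g | x <- T, y <- T]; split; last first.
  by move=> w /allpairsP [[x y] [_ _ ->]]; exists [~ x, y]%g; split => //; exact: derR.
move=> x dx.
set ws := [seq _ | x <- T, y <- T].
have A y : y \in T -> forall wb, all (mem T) wb -> spanR act ws (mu [~ y, \prod_(z <- wb) z]%g).
  move=> yT; elim=> [|z r IH]; first by rewrite big_nil commg1 mu1 => _; exact: span0.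
  move=> /= /andP[zT rT]; rewrite big_cons commMr muM; last first.
  - by apply: derJ; apply: derR.
  - exact: derR.
  apply: spanD; first exact: IH.
  rewrite muJ; last exact: derR.
  by apply: act_span; apply: (span_mem act1) => //; apply: allpairs_f.
have B wa : all (mem T) wa -> forall wb, all (mem T) wb ->
    spanR act ws (mu [~ \prod_(z <- wa) z, \prod_(z <- wb) z]%g).
  elim: wa => [|y r IH]; first by move=> _ wb _; rewrite big_nil comm1g mu1; exact: span0.
  move=> /= /andP[yT rT] wb hb; rewrite big_cons commMl muM; last first.
  - exact: derR.
  - by apply: derJ; apply: derR.
  apply: spanD; last exact: IH.
  by rewrite muJ; [apply: act_span; apply: A | apply: derR].
case: dx => w ->; elim: w => [|[a b] w IH]; first by rewrite big_nil mu1; exact: span0.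
rewrite big_cons muM; last first.
- by exists w.
- exact: derR.
apply: spanD => //=.
have [wa [ha ->]] := hS a; have [wb [hb ->]] := hS b.
by apply: B; apply: hT.
Qed.

End Main.

Unset Implicit Arguments.
Set Strict Implicit.

Theorem lemma9
  (G : groupType) (p : nat)
  (Q : groupType) (pi : G -> Q)
  (V : lmodType (Fp p)) (mu : G -> V) (act : Q -> V -> V)
  (K : fieldType) (chi : G -> K) (phi : galg (Fp p) Q -> K)
  (P : galg (Fp p) Q -> Prop)
  (L : fieldType) (psi : galg (Fp p) Q -> L) :
  fin_generated G ->
  (p = 0%N \/ prime p) ->
  is_abelianization pi ->
  is_Mp mu -> is_Mp_action pi mu act ->
  has_char K p ->
  in_E1 chi -> (exists g : G, chi g != 1) ->
  galg_rmorph phi -> (forall g : G, phi (gdelta (Fp p) (pi g)) = chi g) ->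
  minimal_prime_over (annihilator act) P ->
  (forall f, P f -> phi f = 0) ->
  galg_rmorph psi -> (forall f, psi f = 0 <-> P f) ->
  (forall y : L, exists a b, psi b != 0 /\ y = psi a / psi b) ->
  in_E1 (fun g : G => psi (gdelta (Fp p) (pi g))).
Proof.
move=> hfg _ habel hMp hact _ _ [g1 chig1] hphi phichi [_ JP _] Pphi hpsi psiP _.
pose xi g := psi (gdelta (Fp p) (pi g)).
have xi1 : xi 1%g = 1 by rewrite /xi (pi1 habel) (psi1 hpsi).
have xiM x y : xi (x * y)%g = xi x * xi y.
  by rewrite /xi (piM habel) -gmul_delta (psiM hpsi).
have xi_der x : in_derived x -> xi x = 1.
  by move=> dx; rewrite /xi (pi_der habel dx); exact: (psi1 hpsi).
have xiV x : xi x^-1%g * xi x = 1 by rewrite -xiM mulVg.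
have [a xa] : exists a, xi a != 1.
  apply: NNPP => hn; case/negP: chig1.
  have e : psi (gadd (gdelta (Fp p) (pi g1)) (gopp (gone (Fp p) Q))) = 0.
    rewrite (psiD hpsi) (psiN hpsi) (psi1 hpsi); apply/eqP; rewrite subr_eq0.
    by apply/eqP; apply: NNPP => ne; apply: hn; exists g1; apply/eqP.
  move/psiP/Pphi: e; case: (hphi) => hA _ h1.
  rewrite hA rmorph_opp // h1 phichi => /eqP; by rewrite subr_eq0.
have actL' := actL hact; have actM' := actM habel hMp hact.
have act1' := act1 habel hMp hact; have Qab' := Qab habel.
have [ws [hws hgen]] := fg_span habel hMp hact hfg.
case: (nak actL' actM' act1' Qab' hpsi ws) => [[t [pt ht]]|[f [fl [v0 [hv0 fv0]]]]].
  case/negP: pt; apply/eqP/psiP/JP => v.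
  have := uniq_lin hMp (f1 := gact act t) (f2 := fun _ => 0) (gact_lin actL' t).
  apply => //; first by move=> k u w; rewrite scaler0 addr0.
  by move=> x dx; apply: ht; apply: hws.
pose lam x := f (mu x).
have fl0 : f 0 = 0 := lin_on0 act1' hpsi fl.
have lamM x y : in_derived x -> in_derived y -> lam (x * y)%g = lam x + lam y.
  move=> dx dy; rewrite /lam (muM hMp) // -{1}[mu x](gact_one act1') fl; try exact: hws.
  by rewrite (psi1 hpsi) mul1r.
have lamJ g x : in_derived x -> lam (x ^ g)%g = xi g^-1%g * lam x.
  move=> dx; rewrite /lam (muJ habel hact) // -(piV habel).
  rewrite -(@gact_delta _ _ _ act (pi g^-1)%g (mu x)) -[gact _ _ _]addr0 fl; try exact: hws.
    by rewrite fl0 addr0.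
  exact: span0.
have lam1 : lam 1%g = 0 by rewrite /lam (mu1 hMp) fl0.
have lamV x : in_derived x -> lam x^-1%g = - lam x.
  move=> dx; have := lamM x x^-1%g dx (derV dx); rewrite mulgV lam1 => e.
  by apply/eqP; rewrite -addr_eq0 addrC -e.
have [x0 [dx0 lx0]] : exists x0, in_derived x0 /\ lam x0 != 0.
  apply: NNPP => hn; case/negP: fv0; apply/eqP.
  have gen ws0 : {subset ws0 <= ws} -> forall v, spanR act ws0 v -> f v = 0.
    elim: ws0 => [|w ws0 IH] sub v /=; first by move=> ->.
    move=> [b [u [hu ->]]].
    have wws : w \in ws by apply: sub; rewrite inE eqxx.
    have subr : {subset ws0 <= ws} by move=> z zin; apply: sub; rewrite inE zin orbT.
    rewrite fl; last exact: (span_incl actL' actM' act1' subr hu).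
      rewrite (IH subr _ hu) addr0.
      have [x [dx ->]] := hgen w wws.
      have -> : f (mu x) = 0 by apply: NNPP => ne; apply: hn; exists x; split => //; apply/eqP.
      by rewrite mulr0.
    exact: (span_mem act1').
  by apply: (gen ws).
have key (A B C l1 l2 : L) : C * B = 1 -> A * B * (C * l1 + l2) = A * l1 + A * (B * l2).
  move=> e; rewrite mulrDr -mulrA (mulrA B C) (mulrC B C) e mul1r.
  by rewrite [in RHS]mulrA.
split; first by split.
exists (fun g => xi g * lam [~ g, a]%g); split.
  move=> g h /=; rewrite commMl lamM; last exact: derR.
    rewrite lamJ; last exact: derR.
    by rewrite xiM key // xiV.
  by apply: derJ; exact: derR.
move=> [m hm]; have e : psi (gdelta (Fp p) (pi x0)) = 1 := xi_der x0 dx0.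
have := hm x0; rewrite /= /xi e subrr mulr0 mul1r commgEl.
rewrite lamM; [|exact: derV | exact: derJ].
rewrite lamV // lamJ //.
move/eqP; rewrite addrC -{2}(mul1r (lam x0)) -mulrBl mulf_eq0 subr_eq0 (negbTE lx0) orbF.
move=> /eqP h; case/negP: xa; apply/eqP.
by rewrite -(xiV a) h mul1r.
Qed.
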